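(* If condition $(C_k)$ holds for some $k\in I_n$, then every equilibrium $u$ of the system lying in $\pi_k$ satisfies $\alpha_ku<1$.
   Context: Fix $n\ge 2$ and $I_m=\{1,\dots,m\}$. Consider the Lotka–Volterra system $x_i'=b_ix_i(1-\alpha_ix)$, $i\in I_n$, where $b_i>0$, $\alpha_i=(a_{i1},\dots,a_{in})$ with $a_{ii}>0$ and $a_{ij}\ge 0$, on $\mathbb{R}^n_+$. For $u\le v$ (componentwise), $[u,v]=\{x\in\mathbb{R}^n_+:u\le x\le v\}$. For $J\subset I_n$, $u^J_i=u_i$ for $i\in J$ and $0$ otherwise. $\pi_i=\{x\in\mathbb{R}^n_+:x_i=0\}$, $\gamma_i=\{x\in\mathbb{R}^n_+:\alpha_ix=1\}$. Define $U$ componentwise by: $U_i=a_{ii}^{-1}$ if $a_{ii}\le a_{ji}$ or $a_{ij}=0$ for some $j\ne i$; otherwise $U_i=0$ if $a_{ji}<a_{ii}$ and $a_{jk}\le a_{ik}$ for all $j,k\in I_n\setminus\{i\}$; otherwise $U_i=\max\{\frac{a_{kj}-a_{ij}}{a_{ii}a_{kj}-a_{ij}a_{ki}}: j,k\in I_n\setminus\{i\},\ a_{kj}>a_{ij}\}$. Condition $(C_k)$: either $\alpha_kU^{I_n\setminus\{k\}}<1$, or every $x\in\gamma_k\cap[0,U^{I_n\setminus\{k\}}]$ satisfies $\alpha_jx>1$ for all $j\in I_n\setminus\{k\}$. *)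

(* Defs.v *)
(* the statement is purely algebraic/order-theoretic, so we
   state it over an arbitrary real field R (this includes the real numbers). *)
From HB Require Import structures.
From mathcomp Require Import all_boot all_order all_algebra.
Set Implicit Arguments. Unset Strict Implicit. Unset Printing Implicit Defensive.
Import Order.TTheory GRing.Theory Num.Theory.
Local Open Scope ring_scope.

Section LV.
Variables (R : realFieldType) (n : nat).
Variable A : 'I_n -> 'I_n -> R.

Definition alphax (i : 'I_n) (x : 'I_n -> R) : R := \sum_(j < n) A i j * x j.

Definition nonneg (x : 'I_n -> R) : Prop := forall i, 0 <= x i.

Definition in_box (u v x : 'I_n -> R) : Prop :=
  nonneg x /\ (forall i, u i <= x i /\ x i <= v i).

Definition restr (J : pred 'I_n) (u : 'I_n -> R) : 'I_n -> R :=
  fun i => if J i then u i else 0.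

Definition maxseq (s : seq R) : R := \big[Num.max/head 0 s]_(x <- s) x.

Definition Ucomp (i : 'I_n) : R :=
  if [exists j, (j != i) && ((A i i <= A j i) || (A i j == 0))] then (A i i)^-1
  else if [forall j, (j != i) ==> (A j i < A i i)] &&
          [forall j, forall k, ((j != i) && (k != i)) ==> (A j k <= A i k)]
  then 0
  else maxseq [seq let j := jk.1 in let k := jk.2 in
                    (A k j - A i j) / (A i i * A k j - A i j * A k i)
              | jk <- enum [pred jk : 'I_n * 'I_n |
                             (jk.1 != i) && (jk.2 != i) && (A i jk.1 < A jk.2 jk.1)]].

Definition U : 'I_n -> R := Ucomp.

Definition cond_C (k : 'I_n) : Prop :=
  let W := restr (fun i => i != k) U in
  alphax k W < 1 \/
  (forall x, nonneg x -> alphax k x = 1 -> in_box (fun _ => 0) W x ->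
     forall j, j != k -> 1 < alphax j x).

(* equilibrium of x_i' = b_i x_i (1 - alpha_i x) in R^n_+ *)
Definition equilibrium (b : 'I_n -> R) (u : 'I_n -> R) : Prop :=
  nonneg u /\ forall i, b i * u i * (1 - alphax i u) = 0.
End LV.

(* Main.v *)
Require Import Defs.
From HB Require Import structures.
From mathcomp Require Import all_boot all_order all_algebra.
Import Order.TTheory GRing.Theory Num.Theory.
Local Open Scope ring_scope.

Lemma bigmax_ge (R : realFieldType) (idx : R) (s : seq R) x :
  x \in s -> x <= \big[Num.max/idx]_(y <- s) y.
Proof.
elim: s => // y s IH; rewrite in_cons big_cons => /orP[/eqP->|/IH h].
  by rewrite le_max lexx.
by rewrite le_max h orbT.
Qed.

Lemma bigmax_ge0 (R : realFieldType) (s : seq R) :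
  (forall x, x \in s -> 0 <= x) -> 0 <= maxseq s.
Proof.
move=> hs; rewrite /maxseq big_seq.
apply: (big_ind (fun x => 0 <= x)).
- by case: s hs => //= y s' h; apply: h; rewrite mem_head.
- by move=> x y hx hy; rewrite le_max hx.
- exact: hs.
Qed.

Lemma sum_lt (R : numDomainType) n (P : pred 'I_n) (F G : 'I_n -> R) i0 :
  P i0 -> (forall m, P m -> F m <= G m) -> F i0 < G i0 ->
  \sum_(m | P m) F m < \sum_(m | P m) G m.
Proof.
move=> Pi hle hlt; rewrite (bigD1 i0) //= [X in _ < X](bigD1 i0) //=.
apply: ltr_leD => //; apply: ler_sum => m /andP[Pm _]; exact: hle.
Qed.

Lemma alpha_lt (R : realFieldType) n (A : 'I_n -> 'I_n -> R) u k i :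
  (forall m, m != i -> A k m * u m <= A i m * u m) ->
  A k i * u i < A i i * u i -> alphax A k u < alphax A i u.
Proof.
move=> h hl; rewrite /alphax; apply: (@sum_lt _ _ xpredT _ _ i) => // m _.
by case: (eqVneq m i) => [->|mi]; [exact: ltW | exact: h].
Qed.

Lemma Dpos_lem (R : realFieldType) (x y z w : R) :
  0 <= x -> x < y -> 0 <= z -> z < w -> x * z < w * y.
Proof.
move=> x0 xy z0 zw; apply: (le_lt_trans (y := y * z)).
  exact: ler_wpM2r (ltW xy).
rewrite [y * z]mulrC ltr_pM2r //; exact: le_lt_trans xy.
Qed.

Lemma eq_alpha1 {R : realFieldType} {n} {A : 'I_n -> 'I_n -> R} {b}
  (hb : forall i, 0 < b i) {u} (hu : equilibrium A b u) {j} :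
  0 < u j -> alphax A j u = 1.
Proof.
case: hu => _ h uj; have /eqP := h j.
rewrite mulf_eq0 (negbTE (mulf_neq0 (negbT (gt_eqF (hb j))) (negbT (gt_eqF uj)))) /=.
by rewrite subr_eq0 => /eqP/esym.
Qed.

Lemma U_ge0 {R : realFieldType} {n} {A : 'I_n -> 'I_n -> R}
    (hdiag : forall i, 0 < A i i)
    (hoff : forall i j, i != j -> 0 <= A i j) i : 0 <= U A i.
Proof.
have Anng : forall i j, 0 <= A i j.
  by move=> p q; case: (eqVneq p q) => [->|pq]; [exact: ltW | exact: hoff].
rewrite /U /Ucomp; case: ifP => h1; first by rewrite invr_ge0 ltW.
case: ifP => // _.
apply: bigmax_ge0 => x /mapP [[j l]]; rewrite mem_enum inE /=.
move=> /andP[/andP[ji li] hlt] ->.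
have := negbT h1; move/existsPn/(_ l); rewrite li /= negb_or -ltNge => /andP[hli _].
apply: divr_ge0; first by rewrite subr_ge0 ltW.
by rewrite subr_ge0 ltW // Dpos_lem.
Qed.

Lemma key {R : realFieldType} {n} {A : 'I_n -> 'I_n -> R} {b}
    (hb : forall i, 0 < b i)
    (hdiag : forall i, 0 < A i i)
    (hoff : forall i j, i != j -> 0 <= A i j) {k u}
    (hu : equilibrium A b u) (uk : u k = 0) {i} (ik : i != k) :
  alphax A k u < 1 \/ u i <= U A i.
Proof.
have Anng : forall i j, 0 <= A i j.
  by move=> p q; case: (eqVneq p q) => [->|pq]; [exact: ltW | exact: hoff].
have unn := hu.1.
have alpha1 := eq_alpha1 hb hu.
have ki : k != i by rewrite eq_sym.
case: (leP (u i) 0) => ui0.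
  by right; apply: le_trans ui0 (U_ge0 hdiag hoff i).
have ai1 := alpha1 i ui0.
have split_i : forall F : 'I_n -> R,
    \sum_(j < n) F j = F i + \sum_(j < n | j != i) F j.
  by move=> F; rewrite (bigD1 i).
rewrite /U /Ucomp; case: ifP => h1.
  right; rewrite -[X in _ <= X]mul1r ler_pdivlMr // -ai1 mulrC /alphax split_i.
  by rewrite lerDl sumr_ge0 // => m _; rewrite mulr_ge0.
case: ifP => h2.
  left; case/andP: h2 => /forallP h21 /forallP h22.
  rewrite -ai1; apply: alpha_lt.
    move=> m mi; apply: (ler_wpM2r (unn m)).
    by have := h22 k; move/forallP/(_ m); rewrite ki mi.
  by rewrite ltr_pM2r //; have := h21 k; rewrite ki.
have nc1 : forall j, j != i -> A j i < A i i /\ 0 < A i j.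
  move=> j ji; have := negbT h1; move/existsPn/(_ j).
  rewrite ji /= negb_or -ltNge => /andP[-> h]; split => //.
  by rewrite lt_def h Anng.
set M := maxseq _.
case: (boolP [exists l, (l != i) && (0 < u l)]); last first.
  move/existsPn => hno; left; rewrite -ai1; apply: alpha_lt.
    move=> m mi; have := hno m; rewrite mi /= -leNgt => um.
    have -> : u m = 0 by apply/eqP; rewrite eq_le um unn.
    by rewrite !mulr0.
  by rewrite ltr_pM2r //; exact: (nc1 k ki).1.
case/existsP => l /andP [li ul]; right.
rewrite leNgt; apply/negP => hU.
have al := alpha1 l ul.
have [cli hil] := nc1 l li.
set c := A i i - A l i.
have cpos : 0 < c by rewrite subr_gt0.
set e := 1 - A i i * u i.
have eE : e = \sum_(m < n | m != i) A i m * u m.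
  by rewrite /e -ai1 /alphax split_i addrAC subrr add0r.
have e0 : 0 <= e by rewrite eE sumr_ge0 // => m _; rewrite mulr_ge0.
have hsum : \sum_(m < n | m != i) (A l m - A i m) * u m = c * u i.
  have : \sum_(m < n) (A l m - A i m) * u m = 0.
    rewrite -[RHS](subrr 1) -{1}al -ai1 /alphax -sumrB.
    by apply: eq_bigr => m _; rewrite mulrBl.
  rewrite split_i => /eqP; rewrite addrC addr_eq0 => /eqP ->.
  by rewrite /c -mulNr opprB.
have vle : forall m, m != i -> A i m < A l m ->
    (A l m - A i m) / (A i i * A l m - A i m * A l i) <= M.
  move=> m mi hlt; rewrite /M; apply: bigmax_ge; apply/mapP.
  by exists (m, l) => //; rewrite mem_enum inE /= mi li hlt.
have strictv : forall m, m != i -> A i m < A l m ->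
    e * (A l m - A i m) < u i * c * A i m.
  move=> m mi hlt.
  have vlt := le_lt_trans (vle m mi hlt) hU.
  have Dpos : 0 < A i i * A l m - A i m * A l i.
    by rewrite subr_gt0 Dpos_lem.
  rewrite ltr_pdivrMr // in vlt.
  rewrite /e mulrBl mul1r ltrBlDr.
  have -> : u i * c * A i m + A i i * u i * (A l m - A i m)
      = u i * (A i i * A l m - A i m * A l i).
    rewrite /c -mulrA [A i i * u i]mulrC -mulrA -mulrDr; congr (_ * _).
    rewrite mulrBl !mulrBr addrC addrA subrK (mulrC (A l i)).
    by [].
  exact: vlt.
have term : forall m, m != i ->
    e * ((A l m - A i m) * u m) <= u i * c * (A i m * u m).
  move=> m mi; case: (ltP (A i m) (A l m)) => hlt.
    rewrite !mulrA; apply: (ler_wpM2r (unn m)).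
    exact: ltW (strictv m mi hlt).
  apply: (le_trans (y := 0)).
    by apply: mulr_ge0_le0 e0 _; apply: mulr_le0_ge0; rewrite ?subr_le0.
  by rewrite !mulr_ge0 // ltW.
have [m0 [m0i dpos]] : exists m0, m0 != i /\ 0 < (A l m0 - A i m0) * u m0.
  case: (boolP [exists m, (m != i) && (0 < (A l m - A i m) * u m)]).
    by case/existsP => m /andP[? ?]; exists m.
  move/existsPn => hno; exfalso.
  have : \sum_(m < n | m != i) (A l m - A i m) * u m <= 0.
    by apply: sumr_le0 => m mi; have := hno m; rewrite mi /= -leNgt.
  by rewrite hsum leNgt mulr_gt0.
have um0 : 0 < u m0.
  rewrite lt_def unn andbT; apply/eqP => h; by rewrite h mulr0 ltxx in dpos.
have dpos' : 0 < A l m0 - A i m0 by rewrite -(pmulr_lgt0 _ um0).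
have hlt0 : A i m0 < A l m0 by rewrite -subr_gt0.
have st : e * ((A l m0 - A i m0) * u m0) < u i * c * (A i m0 * u m0).
  by rewrite !mulrA ltr_pM2r // strictv.
have := @sum_lt _ _ (fun m => m != i)
   (fun m => e * ((A l m - A i m) * u m)) (fun m => u i * c * (A i m * u m))
   m0 m0i term st.
rewrite -mulr_sumr -mulr_sumr -eE hsum.
by rewrite [c * u i]mulrC [e * _]mulrC ltxx.
Qed.

Theorem mainTheorem7 (R : realFieldType) (n : nat) (A : 'I_n -> 'I_n -> R)
    (b : 'I_n -> R)
    (hn : (2 <= n)%N)
    (hb : forall i, 0 < b i)
    (hdiag : forall i, 0 < A i i)
    (hoff : forall i j, i != j -> 0 <= A i j)
    (k : 'I_n) (hC : cond_C A k) :
  forall u : 'I_n -> R, equilibrium A b u -> u k = 0 -> alphax A k u < 1.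
Proof.
move=> u hu uk.
have Anng : forall i j, 0 <= A i j.
  by move=> p q; case: (eqVneq p q) => [->|pq]; [exact: ltW | exact: hoff].
have unn := hu.1.
case: (boolP (alphax A k u < 1)) => // hge; exfalso.
rewrite -leNgt in hge.
have hbound : forall i, u i <= restr (fun i => i != k) (U A) i.
  move=> i; rewrite /restr; case: ifP => ik.
    case: (key hb hdiag hoff hu uk ik) => // h.
    by rewrite ltNge hge in h.
  by move/negbFE/eqP: ik => ->; rewrite uk.
case: hC => [hlt | hall].
  have : alphax A k u <= alphax A k (restr (fun i => i != k) (U A)).
    by apply: ler_sum => j _; exact: (ler_wpM2l (Anng k j) (hbound j)).
  by move=> h; have := le_lt_trans (le_trans hge h) hlt; rewrite ltxx.
have apos : 0 < alphax A k u by apply: lt_le_trans ltr01 hge.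
set t := (alphax A k u)^-1.
have tle1 : t <= 1 by rewrite invf_le1.
have t0 : 0 <= t by rewrite invr_ge0 ltW.
pose x := fun j => t * u j.
have ax : forall j, alphax A j x = t * alphax A j u.
  by move=> j; rewrite /alphax mulr_sumr; apply: eq_bigr => m _; rewrite /x mulrCA.
have nx : nonneg x by move=> j; rewrite /x mulr_ge0.
have ax1 : alphax A k x = 1 by rewrite ax mulVf // gt_eqF.
have box : in_box (fun _ => 0) (restr (fun i => i != k) (U A)) x.
  split => // j; split; first exact: nx.
  apply: le_trans (hbound j); rewrite /x.
  by rewrite -[X in _ <= X]mul1r ler_wpM2r.
case: (boolP [exists j, 0 < u j]) => [/existsP[j uj] | /existsPn hno].
  have jk : j != k by apply/eqP => ejk; rewrite ejk uk ltxx in uj.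
  have := hall x nx ax1 box j jk.
  by rewrite ax (eq_alpha1 hb hu uj) mulr1 ltNge tle1.
have : alphax A k u <= 0.
  rewrite /alphax; apply: sumr_le0 => j _; apply: mulr_ge0_le0 (Anng k j) _.
  by rewrite leNgt hno.
by rewrite leNgt apos.
Qed.
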